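(* Let $d\ge1$, $x_1<x_2$, $x_0\in[x_1,x_2]$, let $p,q,r_1,\dots,r_d,s_1,\dots,s_d$ be functions on $[x_1,x_2]$, $Ly=(py')'+qy$, $R_i[y]=r_iy+s_iy'$, and let $u_0$ be a nonvanishing function on $[x_1,x_2]$ with $Lu_0=0$. Then for every $\mathbf n\in\mathbb Z_{\ge0}^d$, $$L\big[u_0\tilde X^{(2\mathbf n)}\big]=2|\mathbf n|(2|\mathbf n|-1)\sum_{i=1}^dR_i\big[u_0\tilde X^{(2\mathbf n-2\delta_i)}\big]$$ and $$L\big[u_0X^{(2\mathbf n+\frac1d\mathbf 1)}\big]=(2|\mathbf n|+1)(2|\mathbf n|)\sum_{i=1}^dR_i\big[u_0X^{(2\mathbf n-2\delta_i+\frac1d\mathbf 1)}\big].$$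
   Context: Notation: $\int f$ denotes $x\mapsto\int_{x_0}^x f(s)\,ds$; $|\mathbf j|=j_1+\cdots+j_d$; $\delta_i$ the $i$-th standard basis vector; $\mathbf 1=(1,\dots,1)$. Generalized formal powers $\tilde X$: for $\mathbf j\in\mathbb Z^d$, admissible means at most one $j_i$ odd; $\tilde X^{(\mathbf 0)}\equiv1$; $\tilde X^{(\mathbf j)}\equiv0$ if some $j_i<0$; for admissible $\mathbf j\ge0$, $\mathbf j\ne\mathbf0$: if $|\mathbf j|$ is odd with odd entry $j_i$, $\tilde X^{(\mathbf j)}=|\mathbf j|\int u_0R_i[u_0\tilde X^{(\mathbf j-\delta_i)}]$; if $|\mathbf j|$ is even, $\tilde X^{(\mathbf j)}=|\mathbf j|\int\frac{1}{pu_0^2}\sum_{i=1}^d\tilde X^{(\mathbf j-\delta_i)}$. Generalized formal powers $X$: indexed by $\mathbf j=\mathbf m+\frac1d\mathbf 1$, $\mathbf m\in\mathbb Z^d$, $|\mathbf j|=|\mathbf m|+1$; admissible means at most one $m_i$ odd; $X^{(\frac1d\mathbf 1-\delta_i)}\equiv\frac1d$; $X^{(\mathbf m+\frac1d\mathbf 1)}\equiv0$ if some $m_i<0$ and $\mathbf m\notin\{-\delta_1,\dots,-\delta_d\}$; for admissible $\mathbf j$ with $\mathbf m\ge0$: if $|\mathbf j|$ is even (exactly one $m_i$ odd), $X^{(\mathbf j)}=|\mathbf j|\int u_0R_i[u_0X^{(\mathbf j-\delta_i)}]$ for that $i$; if $|\mathbf j|$ is odd, $X^{(\mathbf j)}=|\mathbf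 j|\int\frac{1}{pu_0^2}\sum_{i=1}^dX^{(\mathbf j-\delta_i)}$. *)

(* Defs.v *)
From Stdlib Require Import Reals Lra ZArith List ClassicalEpsilon.
From Coquelicot Require Import Coquelicot.
Open Scope R_scope.

Definition mi := nat -> Z.

Definition delta (i : nat) : mi := fun k => if Nat.eqb k i then 1%Z else 0%Z.
Definition mi_sub (j : mi) (i : nat) : mi := fun k => (j k - delta i k)%Z.
Definition mi_abs (d : nat) (j : mi) : Z := fold_right Z.add 0%Z (map j (seq 0 d)).
Definition has_neg (d : nat) (j : mi) : bool :=
  existsb (fun i => Z.ltb (j i) 0) (seq 0 d).
Definition admissible (d : nat) (j : mi) : bool :=
  Nat.leb (length (filter (fun i => Z.odd (j i)) (seq 0 d))) 1.
Definition odd_idx (d : nat) (j : mi) : nat :=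
  match find (fun i => Z.odd (j i)) (seq 0 d) with Some i => i | None => 0%nat end.
Definition is_neg_delta (d : nat) (m : mi) : bool :=
  existsb (fun i => forallb (fun k => Z.eqb (m k) (- delta i k)%Z) (seq 0 d)) (seq 0 d).
Definition nabs (d : nat) (n : nat -> nat) : nat := fold_right Nat.add 0%nat (map n (seq 0 d)).
Definition sumR (d : nat) (F : nat -> R) : R := fold_right Rplus 0 (map F (seq 0 d)).

Definition Icc (a b : R) : R -> Prop := fun t => a <= t <= b.

Definition cont_on (a b : R) (f : R -> R) : Prop :=
  forall x, a <= x <= b -> filterlim f (within (Icc a b) (locally x)) (locally (f x)).

(* derivative relative to [a,b] (one-sided at the end points) *)
Definition is_deriv_on (a b : R) (f : R -> R) (x l : R) : Prop :=
  filterlim (fun t => (f t - f x) / (t - x))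
    (within (fun t => t <> x /\ a <= t <= b) (locally x)) (locally l).
Definition ex_deriv_on (a b : R) (f : R -> R) (x : R) : Prop :=
  exists l, is_deriv_on a b f x l.
Definition Dab (a b : R) (f : R -> R) (x : R) : R :=
  epsilon (inhabits 0) (fun l => is_deriv_on a b f x l).

Definition Lop (a b : R) (p q y : R -> R) (x : R) : R :=
  Dab a b (fun t => p t * Dab a b y t) x + q x * y x.
Definition Rop (a b : R) (r s y : R -> R) (x : R) : R :=
  r x * y x + s x * Dab a b y x.

Section Powers.
Variables (a b x0 : R) (p u0 : R -> R) (r s : nat -> R -> R) (d : nat).

(* fuel is |j| *)
Fixpoint Xt_aux (fuel : nat) (j : mi) : R -> R :=
  if has_neg d j then fun _ => 0 else
  match fuel with
  | O => fun _ => 1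
  | S k =>
    if negb (admissible d j) then fun _ => 0 else
    if Nat.odd (S k) then
      let i := odd_idx d j in
      fun x => INR (S k) *
        RInt (fun t => u0 t * Rop a b (r i) (s i)
                          (fun y => u0 y * Xt_aux k (mi_sub j i) y) t) x0 x
    else
      fun x => INR (S k) *
        RInt (fun t => / (p t * u0 t ^ 2) *
                        sumR d (fun i => Xt_aux k (mi_sub j i) t)) x0 x
  end.

Definition Xt (j : mi) : R -> R := Xt_aux (Z.to_nat (mi_abs d j)) j.

(* X^{(m + 1/d 1)}, fuel is |j| = |m| + 1 *)
Fixpoint X_aux (fuel : nat) (m : mi) : R -> R :=
  if is_neg_delta d m then fun _ => / INR d else
  if has_neg d m then fun _ => 0 else
  match fuel with
  | O => fun _ => 0
  | S k =>
    if negb (admissible d m) then fun _ => 0 else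
    if Nat.even (S k) then
      let i := odd_idx d m in
      fun x => INR (S k) *
        RInt (fun t => u0 t * Rop a b (r i) (s i)
                          (fun y => u0 y * X_aux k (mi_sub m i) y) t) x0 x
    else
      fun x => INR (S k) *
        RInt (fun t => / (p t * u0 t ^ 2) *
                        sumR d (fun i => X_aux k (mi_sub m i) t)) x0 x
  end.

(* Xp m denotes X^{(m + (1/d) 1)} *)
Definition Xp (m : mi) : R -> R := X_aux (Z.to_nat (mi_abs d m) + 1) m.

End Powers.

(* Main.v *)
Require Import Defs.
From Stdlib Require Import Reals ZArith.
From Coquelicot Require Import Coquelicot.
Open Scope R_scope.
From Stdlib Require Import Lra Lia List Bool ClassicalEpsilon FunctionalExtensionality PropExtensionality.

Section Lim.
Context {T : Type} {F : (T -> Prop) -> Prop} {FF : Filter F}.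

Lemma L_plus (f g : T -> R) a b : filterlim f F (locally a) -> filterlim g F (locally b) ->
  filterlim (fun t => f t + g t) F (locally (a + b)).
Proof. intros H1 H2. eapply (filterlim_comp_2 f g Rplus); [exact H1|exact H2|].
  apply (@filterlim_plus R_AbsRing R_NormedModule). Qed.

Lemma L_mult (f g : T -> R) a b : filterlim f F (locally a) -> filterlim g F (locally b) ->
  filterlim (fun t => f t * g t) F (locally (a * b)).
Proof. intros H1 H2. eapply (filterlim_comp_2 f g Rmult); [exact H1|exact H2|].
  apply (@filterlim_mult R_AbsRing). Qed.

Lemma L_const (c : R) : filterlim (fun _ : T => c) F (locally c).
Proof. apply filterlim_const. Qed.

Lemma L_inv (f : T -> R) a : a <> 0 -> filterlim f F (locally a) ->
  filterlim (fun t => / f t) F (locally (/ a)).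
Proof. intros Ha H. eapply filterlim_comp. exact H. apply continuous_Rinv. exact Ha. Qed.

Lemma L_opp (f : T -> R) a : filterlim f F (locally a) -> filterlim (fun t => - f t) F (locally (- a)).
Proof. intros H. replace (-a) with ((-1)*a) by ring.
  eapply filterlim_ext. 2: apply L_mult. 2: apply L_const. 2: exact H. intros; simpl; ring. Qed.

End Lim.

Definition Wd (a b x : R) := within (fun t => t <> x /\ a <= t <= b) (locally x).

Lemma ball_R (x e t : R) : ball x e t <-> Rabs (t - x) < e.
Proof. split; intro H; exact H. Qed.

Lemma W_proper a b x : a < b -> a <= x <= b -> ProperFilter' (Wd a b x).
Proof.
  intros Hab Hx. split; [|apply within_filter, locally_filter].
  intros [eps He]. 
  destruct (Rlt_or_le x b) as [Hxb|Hxb].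
  - set (t := x + Rmin (eps/2) ((b-x)/2)).
    assert (H1 : 0 < Rmin (eps/2) ((b-x)/2)) by (apply Rmin_glb_lt; pose proof (cond_pos eps); lra).
    assert (H2 := Rmin_l (eps/2) ((b-x)/2)). assert (H3 := Rmin_r (eps/2) ((b-x)/2)).
    apply (He t). apply ball_R. unfold t. rewrite Rabs_right; lra.
    unfold t; split; lra.
  - set (t := x - Rmin (eps/2) ((x-a)/2)).
    assert (H1 : 0 < Rmin (eps/2) ((x-a)/2)) by (apply Rmin_glb_lt; pose proof (cond_pos eps); lra).
    assert (H2 := Rmin_l (eps/2) ((x-a)/2)). assert (H3 := Rmin_r (eps/2) ((x-a)/2)).
    apply (He t). apply ball_R. unfold t. rewrite Rabs_left; lra.
    unfold t; split; lra.
Qed.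

Lemma deriv_unique a b f x l1 l2 : a < b -> a <= x <= b ->
  is_deriv_on a b f x l1 -> is_deriv_on a b f x l2 -> l1 = l2.
Proof.
  intros Hab Hx H1 H2. pose proof (W_proper a b x Hab Hx) as HP.
  exact (@filterlim_locally_unique R R_AbsRing R_NormedModule (Wd a b x) HP _ l1 l2 H1 H2).
Qed.

Lemma Dab_eq a b f x l : a < b -> a <= x <= b -> is_deriv_on a b f x l -> Dab a b f x = l.
Proof.
  intros Hab Hx H. unfold Dab.
  pose proof (epsilon_spec (inhabits 0) (fun l => is_deriv_on a b f x l) (ex_intro _ l H)) as He.
  eapply deriv_unique; eauto.
Qed.

Lemma W_le a b x : filter_le (Wd a b x) (locally x).
Proof. intros P HP. unfold Wd, within. apply filter_imp with P; auto. Qed.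

Lemma deriv_lim_f a b f x l : is_deriv_on a b f x l -> filterlim f (Wd a b x) (locally (f x)).
Proof.
  intros H.
  assert (Hid : filterlim (fun t => t - x) (Wd a b x) (locally (x - x))).
  { apply L_plus. eapply filterlim_filter_le_1. apply W_le. apply filterlim_id. apply L_const. }
  rewrite Rminus_diag in Hid.
  pose proof (L_plus _ _ _ _ (L_const (f x)) (L_mult _ _ _ _ H Hid)) as H2.
  rewrite Rmult_0_r, Rplus_0_r in H2.
  eapply filterlim_within_ext. 2: exact H2.
  intros t [Ht _]. simpl. field. intro E; apply Ht; lra.
Qed.

Lemma D_ext a b f g x l : a <= x <= b -> (forall t, a <= t <= b -> f t = g t) ->
  is_deriv_on a b f x l -> is_deriv_on a b g x l.
Proof.
  intros Hx He H. unfold is_deriv_on in *. eapply filterlim_within_ext. 2: exact H.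
  intros t [_ Ht]. simpl. rewrite (He t Ht), (He x Hx). reflexivity.
Qed.

Lemma D_const a b c x : is_deriv_on a b (fun _ => c) x 0.
Proof.
  unfold is_deriv_on. eapply filterlim_within_ext. 2: apply (L_const 0).
  intros t [Ht _]. simpl. field. intro E; apply Ht; lra.
Qed.

Lemma D_plus a b f g x lf lg : is_deriv_on a b f x lf -> is_deriv_on a b g x lg ->
  is_deriv_on a b (fun t => f t + g t) x (lf + lg).
Proof.
  intros Hf Hg. unfold is_deriv_on. eapply filterlim_within_ext. 2: apply L_plus; [exact Hf|exact Hg].
  intros t [Ht _]. simpl. field. intro E; apply Ht; lra.
Qed.

Lemma D_mult a b f g x lf lg : is_deriv_on a b f x lf -> is_deriv_on a b g x lg ->
  is_deriv_on a b (fun t => f t * g t) x (lf * g x + f x * lg).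
Proof.
  intros Hf Hg. unfold is_deriv_on.
  eapply filterlim_within_ext.
  2: apply L_plus; [apply L_mult; [exact Hf | exact (deriv_lim_f _ _ _ _ _ Hg)]
                   | apply L_mult; [apply L_const | exact Hg]].
  intros t [Ht _]. simpl. field. intro E; apply Ht; lra.
Qed.

Lemma D_inv a b g x lg : (forall t, a <= t <= b -> g t <> 0) -> a <= x <= b ->
  is_deriv_on a b g x lg -> is_deriv_on a b (fun t => / g t) x (- lg * / g x * / g x).
Proof.
  intros Hnz Hx Hg. unfold is_deriv_on.
  eapply filterlim_within_ext.
  2: apply L_mult; [apply L_mult; [apply L_opp; exact Hg | apply L_inv; [apply Hnz, Hx| exact (deriv_lim_f _ _ _ _ _ Hg)]] | apply L_const].
  intros t [Ht Ht2]. simpl. field. repeat split; auto. intro E; apply Ht; lra.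
Qed.

Lemma deriv_cont a b f x l : is_deriv_on a b f x l ->
  filterlim f (within (Icc a b) (locally x)) (locally (f x)).
Proof.
  intros H. apply deriv_lim_f in H.
  apply filterlim_locally. intros eps.
  pose proof (proj1 (filterlim_locally _ _) H eps) as H2.
  unfold Wd, within in H2. unfold within. apply filter_imp with (2 := H2).
  intros t Ht Hicc. destruct (Req_dec t x) as [->|Hne]. apply ball_center. apply Ht. split; auto.
Qed.

Definition clamp (a b t : R) := Rmax a (Rmin b t).

Lemma clamp_Icc a b t : a <= b -> Icc a b (clamp a b t).
Proof. intros H. unfold Icc, clamp, Rmax, Rmin. repeat destruct Rle_dec; lra. Qed.

Lemma clamp_id a b t : a <= t <= b -> clamp a b t = t.
Proof. intros H. unfold clamp, Rmax, Rmin. repeat destruct Rle_dec; lra. Qed.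

Lemma clamp_lip a b t z : Rabs (clamp a b t - clamp a b z) <= Rabs (t - z).
Proof. unfold clamp, Rmax, Rmin. repeat destruct Rle_dec; unfold Rabs; repeat destruct Rcase_abs; lra. Qed.

Lemma clamp_cont_G a b (g : R -> R) z : a <= b -> cont_on a b g ->
  continuous (fun t => g (clamp a b t)) z.
Proof.
  intros Hab Hg. unfold continuous.
  eapply filterlim_comp. 2: apply (Hg (clamp a b z) (clamp_Icc a b z Hab)).
  intros P HP. unfold within in HP. destruct HP as [eps He].
  exists eps. intros t Ht. apply He. apply ball_R. apply ball_R in Ht.
  eapply Rle_lt_trans. apply clamp_lip. exact Ht. apply clamp_Icc, Hab.
Qed.

Lemma dpl_to_W a b f x l : derivable_pt_lim f x l ->
  filterlim (fun t => (f t - f x) / (t - x)) (Wd a b x) (locally l).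
Proof.
  intros H. apply filterlim_locally. intros eps.
  destruct (H eps (cond_pos eps)) as [delta Hd].
  unfold Wd, within. exists delta. intros t Ht [Htx _]. apply ball_R in Ht. apply ball_R.
  assert (Hh : t - x <> 0) by (intro E; apply Htx; lra).
  specialize (Hd (t - x) Hh Ht). assert (E : (x + (t - x) : R) = t) by (simpl; ring).
  rewrite E in Hd. exact Hd.
Qed.

Lemma D_RInt a b g x0 x : a < b -> cont_on a b g -> a <= x0 <= b -> a <= x <= b ->
  is_deriv_on a b (fun y => RInt g x0 y) x (g x).
Proof.
  intros Hab Hg H0 Hx.
  set (G := fun t => g (clamp a b t)).
  assert (HG : forall z, continuous G z) by (intro z; apply clamp_cont_G; auto; lra).
  assert (HD : is_derive (fun y => RInt G x0 y) x (G x)).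
  { apply (is_derive_RInt G (fun y => RInt G x0 y) x0 x). apply filter_forall. intros y. apply (@RInt_correct R_CompleteNormedModule).
    apply ex_RInt_continuous. intros; apply HG. apply HG. }
  apply is_derive_Reals in HD. apply (dpl_to_W a b _ x) in HD.
  replace (G x) with (g x) in HD by (unfold G; rewrite clamp_id by exact Hx; reflexivity).
  unfold is_deriv_on. eapply filterlim_within_ext. 2: exact HD.
  intros t [_ Ht]. simpl.
  assert (E : forall y, a <= y <= b -> RInt G x0 y = RInt g x0 y).
  { intros y Hy. apply RInt_ext. intros z Hz. unfold G. rewrite clamp_id. reflexivity.
    unfold Rmin, Rmax in Hz; destruct Rle_dec in Hz; lra. }
  rewrite (E t Ht), (E x Hx). reflexivity.
Qed.

Lemma cont_ext a b f g : (forall t, a <= t <= b -> f t = g t) -> cont_on a b f -> cont_on a b g.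
Proof.
  intros He Hf x Hx. rewrite <- (He x Hx). eapply filterlim_within_ext. 2: apply (Hf x Hx).
  intros t Ht; apply He, Ht.
Qed.

Lemma cont_const a b c : cont_on a b (fun _ => c).
Proof. intros x Hx. apply L_const. Qed.

Lemma cont_plus a b f g : cont_on a b f -> cont_on a b g -> cont_on a b (fun t => f t + g t).
Proof. intros Hf Hg x Hx. apply L_plus; auto. Qed.

Lemma cont_mult a b f g : cont_on a b f -> cont_on a b g -> cont_on a b (fun t => f t * g t).
Proof. intros Hf Hg x Hx. apply L_mult; auto. Qed.

Lemma cont_inv a b f : (forall t, a <= t <= b -> f t <> 0) -> cont_on a b f -> cont_on a b (fun t => / f t).
Proof. intros Hnz Hf x Hx. apply L_inv; auto. Qed.

Lemma cont_sumR a b d (F : nat -> R -> R) : (forall i, (i < d)%nat -> cont_on a b (F i)) ->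
  cont_on a b (fun t => sumR d (fun i => F i t)).
Proof.
  intros H. unfold sumR.
  assert (Hl : forall l, (forall i, In i l -> cont_on a b (F i)) ->
     cont_on a b (fun t => fold_right Rplus 0 (map (fun i => F i t) l))).
  { induction l as [|i l IH]; intros Hin; simpl. apply cont_const.
    apply cont_plus. apply Hin; left; auto. apply IH; intros; apply Hin; right; auto. }
  apply Hl. intros i Hi. apply in_seq in Hi. apply H; lia.
Qed.

Definition C1 a b f := (forall x, a <= x <= b -> ex_deriv_on a b f x) /\ cont_on a b (Dab a b f).

Lemma C1_deriv a b f x : a < b -> C1 a b f -> a <= x <= b -> is_deriv_on a b f x (Dab a b f x).
Proof.
  intros Hab [H _] Hx. destruct (H x Hx) as [l Hl]. rewrite (Dab_eq _ _ _ _ _ Hab Hx Hl). exact Hl.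
Qed.

Lemma C1_cont a b f : C1 a b f -> cont_on a b f.
Proof. intros [H _] x Hx. destruct (H x Hx) as [l Hl]. eapply deriv_cont; eauto. Qed.

Lemma C1_of a b f f' : a < b -> (forall x, a <= x <= b -> is_deriv_on a b f x (f' x)) ->
  cont_on a b f' -> C1 a b f.
Proof.
  intros Hab H Hc. split. intros x Hx; exists (f' x); auto.
  eapply cont_ext. 2: exact Hc. intros t Ht. symmetry. apply Dab_eq; auto.
Qed.

Lemma C1_const a b c : a < b -> C1 a b (fun _ => c).
Proof. intros Hab. apply C1_of with (fun _ => 0); auto. intros; apply D_const. apply cont_const. Qed.

Lemma C1_plus a b f g : a < b -> C1 a b f -> C1 a b g -> C1 a b (fun t => f t + g t).
Proof.
  intros Hab Hf Hg. apply C1_of with (fun t => Dab a b f t + Dab a b g t); auto.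
  intros; apply D_plus; apply C1_deriv; auto.
  apply cont_plus; [apply Hf|apply Hg].
Qed.

Lemma C1_mult a b f g : a < b -> C1 a b f -> C1 a b g -> C1 a b (fun t => f t * g t).
Proof.
  intros Hab Hf Hg. apply C1_of with (fun t => Dab a b f t * g t + f t * Dab a b g t); auto.
  intros; apply D_mult; apply C1_deriv; auto.
  apply cont_plus; apply cont_mult; try apply Hf; try apply Hg; apply C1_cont; auto.
Qed.


Lemma D_RInt_c a b c g x0 x : a < b -> cont_on a b g -> a <= x0 <= b -> a <= x <= b ->
  is_deriv_on a b (fun y => c * RInt g x0 y) x (c * g x).
Proof.
  intros Hab Hg H0 Hx. eapply D_ext with (f := fun y => c * RInt g x0 y); auto.
  pose proof (D_mult a b _ _ x _ _ (D_const a b c x) (D_RInt a b g x0 x Hab Hg H0 Hx)) as H.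
  simpl in H. replace (c * g x) with (0 * RInt g x0 x + c * g x) by ring. exact H.
Qed.

Lemma C1_RInt a b c g x0 : a < b -> cont_on a b g -> a <= x0 <= b ->
  C1 a b (fun y => c * RInt g x0 y).
Proof.
  intros Hab Hg H0. apply C1_of with (fun t => c * g t); auto.
  intros x Hx. apply D_RInt_c; auto.
  apply cont_mult; auto. apply cont_const.
Qed.

Lemma C1_inv a b f : a < b -> (forall t, a <= t <= b -> f t <> 0) -> C1 a b f -> C1 a b (fun t => / f t).
Proof.
  intros Hab Hnz Hf. apply C1_of with (fun t => - Dab a b f t * / f t * / f t); auto.
  intros; apply D_inv; auto; apply C1_deriv; auto.
  apply cont_mult; [apply cont_mult|]. 
  eapply cont_ext. 2: apply cont_mult; [apply cont_const with (c := -1)| apply Hf]. intros; simpl; ring.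
  all: apply cont_inv; auto; apply C1_cont; auto.
Qed.

Lemma D_sumR a b d (F : nat -> R -> R) x (l : nat -> R) :
  (forall i, (i < d)%nat -> is_deriv_on a b (F i) x (l i)) ->
  is_deriv_on a b (fun t => sumR d (fun i => F i t)) x (sumR d l).
Proof.
  intros H. unfold sumR.
  assert (Hl : forall L, (forall i, In i L -> is_deriv_on a b (F i) x (l i)) ->
     is_deriv_on a b (fun t => fold_right Rplus 0 (map (fun i => F i t) L)) x (fold_right Rplus 0 (map l L))).
  { induction L as [|i L IH]; intros Hin; simpl. apply D_const.
    apply D_plus. apply Hin; left; auto. apply IH; intros; apply Hin; right; auto. }
  apply Hl. intros i Hi. apply in_seq in Hi. apply H; lia.
Qed.

Lemma C1_sumR a b d (F : nat -> R -> R) : a < b -> (forall i, (i < d)%nat -> C1 a b (F i)) ->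
  C1 a b (fun t => sumR d (fun i => F i t)).
Proof.
  intros Hab H. apply C1_of with (fun t => sumR d (fun i => Dab a b (F i) t)); auto.
  intros x Hx. apply D_sumR. intros i Hi. apply C1_deriv; auto.
  apply cont_sumR. intros i Hi; apply H; auto.
Qed.

Lemma sumR_scal d (F : nat -> R) c : sumR d (fun i => c * F i) = c * sumR d F.
Proof. unfold sumR. induction (seq 0 d); simpl; [ring| rewrite IHl; ring]. Qed.

Lemma sumR_ext d (F G : nat -> R) : (forall i, (i < d)%nat -> F i = G i) -> sumR d F = sumR d G.
Proof.
  intros H. unfold sumR. assert (forall L, (forall i, In i L -> F i = G i) ->
    fold_right Rplus 0 (map F L) = fold_right Rplus 0 (map G L)).
  { induction L; simpl; intros Hi; auto. rewrite Hi, IHL; auto. }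
  apply H0. intros i Hi; apply in_seq in Hi; apply H; lia.
Qed.

Section Main.
Variables (a b x0 : R) (p q u0 : R -> R).
Hypothesis Hab : a < b.
Hypothesis H0 : a <= x0 <= b.
Hypothesis Hp : cont_on a b p.
Hypothesis Hpnz : forall x, a <= x <= b -> p x <> 0.
Hypothesis Hunz : forall x, a <= x <= b -> u0 x <> 0.
Hypothesis Hud : forall x, a <= x <= b -> ex_deriv_on a b u0 x.
Hypothesis HPd : forall x, a <= x <= b -> ex_deriv_on a b (fun t => p t * Dab a b u0 t) x.
Hypothesis HL : forall x, a <= x <= b -> Lop a b p q u0 x = 0.

Lemma C1_u0 : C1 a b u0.
Proof.
  split; auto.
  assert (HP : cont_on a b (fun t => p t * Dab a b u0 t)).
  { intros x Hx. destruct (HPd x Hx) as [l Hl]. exact (deriv_cont _ _ _ _ _ Hl). }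
  eapply cont_ext. 2: apply cont_mult; [exact HP | apply cont_inv; [exact Hpnz | exact Hp]].
  intros t Ht. simpl. field. apply Hpnz, Ht.
Qed.

Lemma L_formula c S x : C1 a b S -> a <= x <= b ->
  Lop a b p q (fun t => u0 t * (c * RInt (fun t => / (p t * u0 t ^ 2) * S t) x0 t)) x
  = c * Dab a b S x / u0 x.
Proof.
  intros HS Hx.
  set (g := fun t => / (p t * u0 t ^ 2) * S t).
  set (X := fun y => c * RInt g x0 y).
  assert (Hg : cont_on a b g).
  { apply cont_mult. apply cont_inv. intros t Ht. apply Rmult_integral_contrapositive; split.
    apply Hpnz, Ht. apply pow_nonzero, Hunz, Ht.
    apply cont_mult. exact Hp. apply cont_mult. apply C1_cont, C1_u0.
    apply cont_mult. apply C1_cont, C1_u0. apply cont_const. apply C1_cont, HS. }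
  assert (HX : forall t, a <= t <= b -> is_deriv_on a b X t (c * g t)).
  { intros t Ht. apply D_RInt_c; auto. }
  assert (H1 : forall t, a <= t <= b -> Dab a b (fun t => u0 t * X t) t = Dab a b u0 t * X t + u0 t * (c * g t)).
  { intros t Ht. apply Dab_eq; auto. apply D_mult; auto. apply C1_deriv; auto. apply C1_u0. }
  set (P := fun t => p t * Dab a b u0 t).
  assert (H2 : forall t, a <= t <= b -> P t * X t + c * S t * / u0 t = p t * Dab a b (fun t => u0 t * X t) t).
  { intros t Ht. rewrite H1 by exact Ht. unfold P, g. field. split; [apply Hunz|apply Hpnz]; exact Ht. }
  destruct (HPd x Hx) as [lP HlP]. fold P in HlP.
  assert (H3 : is_deriv_on a b (fun t => P t * X t + c * S t * / u0 t) x
     (lP * X x + P x * (c * g x) + ((0 * S x + c * Dab a b S x) * / u0 x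
        + (c * S x) * (- Dab a b u0 x * / u0 x * / u0 x)))).
  { apply D_plus. apply D_mult; [exact HlP| apply HX, Hx].
    apply (D_mult a b (fun t => c * S t) (fun t => / u0 t)).
    apply (D_mult a b (fun _ => c) S). apply D_const. apply C1_deriv; auto.
    apply D_inv; auto. apply C1_deriv; auto. apply C1_u0. }
  apply (D_ext _ _ _ _ _ _ Hx H2) in H3.
  unfold Lop. change (Dab a b (fun t => p t * Dab a b (fun t0 => u0 t0 * X t0) t) x + q x * (u0 x * X x) = c * Dab a b S x / u0 x).
  rewrite (Dab_eq _ _ _ _ _ Hab Hx H3).
  pose proof (HL x Hx) as HLx. unfold Lop in HLx. fold P in HLx.
  rewrite (Dab_eq _ _ _ _ _ Hab Hx HlP) in HLx.
  assert (ElP : lP = - (q x * u0 x)) by lra. rewrite ElP.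
  unfold P, g. field. split; [apply Hunz|apply Hpnz]; exact Hx.
Qed.

End Main.

Lemma odd_idx_lt d j : (1 <= d)%nat -> (odd_idx d j < d)%nat.
Proof.
  intros Hd. unfold odd_idx. destruct (find _ _) eqn:E.
  - apply find_some in E. destruct E as [E _]. apply in_seq in E. lia.
  - lia.
Qed.

Lemma has_neg_iff d m : has_neg d m = true <-> exists k, (k < d)%nat /\ (m k < 0)%Z.
Proof.
  unfold has_neg. rewrite existsb_exists. split.
  - intros [k [Hk H]]. apply in_seq in Hk. exists k. split. lia. apply Z.ltb_lt, H.
  - intros [k [Hk H]]. exists k. split. apply in_seq; lia. apply Z.ltb_lt, H.
Qed.

Lemma has_neg_false d m : (forall k, (k < d)%nat -> (0 <= m k)%Z) -> has_neg d m = false.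
Proof.
  intros H. destruct (has_neg d m) eqn:E; auto. apply has_neg_iff in E.
  destruct E as [k [Hk Hm]]. specialize (H k Hk). lia.
Qed.

Lemma filter_le1 (P : nat -> bool) i l : NoDup l -> (forall k, In k l -> P k = true -> k = i) ->
  (length (filter P l) <= 1)%nat.
Proof.
  induction l as [|x l IH]; intros Hnd H; simpl. lia.
  inversion Hnd; subst.
  destruct (P x) eqn:Px.
  - assert (Hx : x = i) by (apply H; simpl; auto). subst.
    destruct (filter P l) eqn:E. simpl; lia.
    exfalso. assert (Hn : In n (filter P l)) by (rewrite E; left; auto).
    apply filter_In in Hn. destruct Hn as [Hn Pn].
    assert (n = i) by (apply H; simpl; auto). subst. contradiction.
  - apply IH; auto. intros k Hk Pk; apply H; simpl; auto.
Qed.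

Lemma admissible_of d m i : (forall k, (k < d)%nat -> Z.odd (m k) = true -> k = i) -> admissible d m = true.
Proof.
  intros H. unfold admissible. apply Nat.leb_le. apply filter_le1 with i. apply seq_NoDup.
  intros k Hk. apply in_seq in Hk. apply H. lia.
Qed.

Lemma find_of (P : nat -> bool) i l : (forall k, In k l -> (P k = true <-> k = i)) -> In i l -> find P l = Some i.
Proof.
  induction l as [|x l IH]; intros H Hi; simpl. destruct Hi.
  destruct (P x) eqn:Px.
  - f_equal. apply (H x); simpl; auto.
  - apply IH. intros; apply H; simpl; auto.
    destruct Hi as [->|Hi]; auto. exfalso. assert (P i = true) by (apply H; simpl; auto). congruence.
Qed.

Lemma odd_idx_of d m i : (i < d)%nat -> (forall k, (k < d)%nat -> (Z.odd (m k) = true <-> k = i)) -> odd_idx d m = i.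
Proof.
  intros Hi H. unfold odd_idx. rewrite (find_of _ i). auto.
  intros k Hk; apply in_seq in Hk; apply H; lia. apply in_seq; lia.
Qed.

Lemma is_neg_delta_iff d m : is_neg_delta d m = true <->
  exists i, (i < d)%nat /\ forall k, (k < d)%nat -> m k = (- delta i k)%Z.
Proof.
  unfold is_neg_delta. rewrite existsb_exists. split.
  - intros [i [Hi H]]. apply in_seq in Hi. exists i. split. lia.
    intros k Hk. rewrite forallb_forall in H. apply Z.eqb_eq, H, in_seq. lia.
  - intros [i [Hi H]]. exists i. split. apply in_seq; lia.
    apply forallb_forall. intros k Hk. apply in_seq in Hk. apply Z.eqb_eq, H. lia.
Qed.

Lemma foldZ_sub (f g : nat -> Z) l : fold_right Z.add 0%Z (map (fun k => (f k - g k)%Z) l)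
  = (fold_right Z.add 0%Z (map f l) - fold_right Z.add 0%Z (map g l))%Z.
Proof. induction l; simpl; lia. Qed.

Lemma fold_delta i s len : fold_right Z.add 0%Z (map (delta i) (seq s len)) =
  if (s <=? i) && (i <? s + len) then 1%Z else 0%Z.
Proof.
  revert s. induction len; intros s; simpl.
  - destruct (s <=? i) eqn:E1; destruct (i <? s + 0) eqn:E2; simpl; auto.
    apply Nat.leb_le in E1; apply Nat.ltb_lt in E2; lia.
  - rewrite IHlen. unfold delta at 1.
    destruct (Nat.eqb s i) eqn:E; [apply Nat.eqb_eq in E; subst|apply Nat.eqb_neq in E].
    + replace ((S i <=? i)) with false by (symmetry; apply Nat.leb_gt; lia).
      replace (i <=? i) with true by (symmetry; apply Nat.leb_le; lia).
      replace (i <? i + S len) with true by (symmetry; apply Nat.ltb_lt; lia). simpl. lia.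
    + destruct (s <=? i) eqn:E1; destruct (S s <=? i) eqn:E1'; destruct (i <? S s + len) eqn:E2;
      destruct (i <? s + S len) eqn:E2'; simpl;
      repeat match goal with H : (_ <=? _) = _ |- _ => first [apply Nat.leb_le in H | apply Nat.leb_gt in H] end;
      repeat match goal with H : (_ <? _) = _ |- _ => first [apply Nat.ltb_lt in H | apply Nat.ltb_ge in H] end;
      lia.
Qed.

Lemma mi_abs_sub d m i : (i < d)%nat -> mi_abs d (mi_sub m i) = (mi_abs d m - 1)%Z.
Proof.
  intros Hi. unfold mi_abs, mi_sub. rewrite foldZ_sub. rewrite fold_delta.
  replace ((0 <=? i) && (i <? 0 + d))%bool with true. lia.
  symmetry. apply andb_true_intro. split. apply Nat.leb_le; lia. apply Nat.ltb_lt; lia.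
Qed.

Lemma mi_abs_2n d (n : nat -> nat) : mi_abs d (fun k => (2 * Z.of_nat (n k))%Z) = (2 * Z.of_nat (nabs d n))%Z.
Proof. unfold mi_abs, nabs. induction (seq 0 d) as [|x l IH]; cbn [map fold_right]. lia.
  rewrite IH. lia. Qed.

Lemma nabs_zero d n : nabs d n = 0%nat -> forall k, (k < d)%nat -> n k = 0%nat.
Proof.
  unfold nabs. intros H k Hk. assert (Hin : In k (seq 0 d)) by (apply in_seq; lia).
  revert H Hin. induction (seq 0 d); simpl; intros H Hin. destruct Hin.
  destruct Hin as [->|Hin]; lia || (apply IHl; auto; lia).
Qed.

Lemma Xt_0 a b x0 p u0 r s d j : Xt_aux a b x0 p u0 r s d 0 j =
  if has_neg d j then fun _ => 0 else fun _ => 1.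
Proof. reflexivity. Qed.

Lemma Xt_S a b x0 p u0 r s d k j : Xt_aux a b x0 p u0 r s d (S k) j =
  if has_neg d j then fun _ => 0 else
    if negb (admissible d j) then fun _ => 0 else
    if Nat.odd (S k) then
      let i := odd_idx d j in
      fun x => INR (S k) *
        RInt (fun t => u0 t * Rop a b (r i) (s i)
                          (fun y => u0 y * Xt_aux a b x0 p u0 r s d k (mi_sub j i) y) t) x0 x
    else
      fun x => INR (S k) *
        RInt (fun t => / (p t * u0 t ^ 2) *
                        sumR d (fun i => Xt_aux a b x0 p u0 r s d k (mi_sub j i) t)) x0 x.
Proof. reflexivity. Qed.

Lemma X_0 a b x0 p u0 r s d j : X_aux a b x0 p u0 r s d 0 j =
  if is_neg_delta d j then fun _ => / INR d else
  if has_neg d j then fun _ => 0 else fun _ => 0.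
Proof. reflexivity. Qed.

Lemma X_S a b x0 p u0 r s d k m : X_aux a b x0 p u0 r s d (S k) m =
  if is_neg_delta d m then fun _ => / INR d else
  if has_neg d m then fun _ => 0 else
    if negb (admissible d m) then fun _ => 0 else
    if Nat.even (S k) then
      let i := odd_idx d m in
      fun x => INR (S k) *
        RInt (fun t => u0 t * Rop a b (r i) (s i)
                          (fun y => u0 y * X_aux a b x0 p u0 r s d k (mi_sub m i) y) t) x0 x
    else
      fun x => INR (S k) *
        RInt (fun t => / (p t * u0 t ^ 2) *
                        sumR d (fun i => X_aux a b x0 p u0 r s d k (mi_sub m i) t)) x0 x.
Proof. reflexivity. Qed.

Section Reg.
Variables (a b x0 : R) (p q u0 : R -> R) (r s : nat -> R -> R) (d : nat).
Hypothesis Hd : (1 <= d)%nat.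
Hypothesis Hab : a < b.
Hypothesis H0 : a <= x0 <= b.
Hypothesis Hp : cont_on a b p.
Hypothesis Hrs : forall i, (i < d)%nat -> cont_on a b (r i) /\ cont_on a b (s i).
Hypothesis Hpnz : forall x, a <= x <= b -> p x <> 0.
Hypothesis Hunz : forall x, a <= x <= b -> u0 x <> 0.
Hypothesis Hud : forall x, a <= x <= b -> ex_deriv_on a b u0 x.
Hypothesis HPd : forall x, a <= x <= b -> ex_deriv_on a b (fun t => p t * Dab a b u0 t) x.

Lemma Cu0 : C1 a b u0.
Proof. apply (C1_u0 a b p u0); auto. Qed.

Lemma cont_w : cont_on a b (fun t => / (p t * u0 t ^ 2)).
Proof.
  apply cont_inv. intros t Ht. apply Rmult_integral_contrapositive; split.
  apply Hpnz, Ht. apply pow_nonzero, Hunz, Ht.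
  apply cont_mult. exact Hp. apply cont_mult. apply C1_cont, Cu0.
  apply cont_mult. apply C1_cont, Cu0. apply cont_const.
Qed.

Lemma cont_oddint i Y : (i < d)%nat -> C1 a b Y ->
  cont_on a b (fun t => u0 t * Rop a b (r i) (s i) (fun y => u0 y * Y y) t).
Proof.
  intros Hi HY. destruct (Hrs i Hi) as [Hr Hs].
  assert (HuY : C1 a b (fun y => u0 y * Y y)) by (apply C1_mult; auto; apply Cu0).
  apply cont_mult. apply C1_cont, Cu0. unfold Rop.
  apply cont_plus; apply cont_mult; auto. apply C1_cont, HuY. apply HuY.
Qed.

Lemma Xt_C1 k : forall j, C1 a b (Xt_aux a b x0 p u0 r s d k j).
Proof.
  induction k as [|k IH]; intros j.
  - rewrite Xt_0. destruct has_neg; apply C1_const; auto.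
  - rewrite Xt_S. destruct has_neg; [apply C1_const; auto|].
    destruct negb; [apply C1_const; auto|]. destruct Nat.odd; cbv zeta.
    + apply C1_RInt; auto. apply cont_oddint; auto. apply odd_idx_lt, Hd.
    + apply C1_RInt; auto. apply cont_mult. apply cont_w.
      apply cont_sumR. intros i Hi. apply C1_cont, IH.
Qed.

Lemma X_C1 k : forall j, C1 a b (X_aux a b x0 p u0 r s d k j).
Proof.
  induction k as [|k IH]; intros j.
  - rewrite X_0. destruct is_neg_delta; [apply C1_const; auto|]. destruct has_neg; apply C1_const; auto.
  - rewrite X_S. destruct is_neg_delta; [apply C1_const; auto|]. destruct has_neg; [apply C1_const; auto|].
    destruct negb; [apply C1_const; auto|]. destruct Nat.even; cbv zeta.
    + apply C1_RInt; auto. apply cont_oddint; auto. apply odd_idx_lt, Hd.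
    + apply C1_RInt; auto. apply cont_mult. apply cont_w.
      apply cont_sumR. intros i Hi. apply C1_cont, IH.
Qed.

End Reg.

Lemma Dab_ext a b f g x : a <= x <= b -> (forall t, a <= t <= b -> f t = g t) -> Dab a b f x = Dab a b g x.
Proof.
  intros Hx H. unfold Dab. f_equal. apply functional_extensionality. intros l.
  apply propositional_extensionality. split; apply D_ext; auto. intros; symmetry; auto.
Qed.

Lemma Xt_neg a b x0 p u0 r s d k j : has_neg d j = true -> Xt_aux a b x0 p u0 r s d k j = fun _ => 0.
Proof. intros H. destruct k; [rewrite Xt_0|rewrite Xt_S]; rewrite H; reflexivity. Qed.

Lemma X_neg a b x0 p u0 r s d k j : is_neg_delta d j = false -> has_neg d j = true -> X_aux a b x0 p u0 r s d k j = fun _ => 0.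
Proof. intros H1 H. destruct k; [rewrite X_0|rewrite X_S]; rewrite H1, H; reflexivity. Qed.

Lemma oddZ2 z : Z.odd (2 * z) = false.
Proof. rewrite Z.odd_mul. reflexivity. Qed.

Lemma oddZ2d z (e : Z) : (e = 0 \/ e = 1)%Z -> Z.odd (2 * z - e) = true <-> e = 1%Z.
Proof.
  intros [-> | ->]. rewrite Z.sub_0_r, oddZ2. split; discriminate.
  rewrite Z.odd_sub, oddZ2. simpl. split; auto.
Qed.

Lemma delta01 i k : (delta i k = 0 \/ delta i k = 1)%Z.
Proof. unfold delta. destruct (Nat.eqb k i); auto. Qed.

Lemma delta1 i k : delta i k = 1%Z <-> k = i.
Proof. unfold delta. destruct (Nat.eqb k i) eqn:E. apply Nat.eqb_eq in E; split; auto.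
  apply Nat.eqb_neq in E. split; intro; [discriminate|contradiction]. Qed.

Lemma delta_ii i : delta i i = 1%Z.
Proof. apply delta1; auto. Qed.

Lemma Rop_zero a b r s u0 x : a < b -> a <= x <= b -> Rop a b r s (fun t => u0 t * 0) x = 0.
Proof.
  intros Hab Hx. unfold Rop. rewrite (Dab_eq a b _ x 0 Hab Hx). ring.
  apply D_ext with (f := fun _ => 0); auto. intros; ring. apply D_const.
Qed.

Lemma odd_f k : Nat.odd (S (2 * k + 1)) = false.
Proof. apply Bool.not_true_iff_false. intro H. apply Nat.odd_spec in H. destruct H. lia. Qed.
Lemma odd_t k : Nat.odd (S (2 * k)) = true.
Proof. apply Nat.odd_spec. exists k. lia. Qed.
Lemma even_f k : Nat.even (S (2 * k)) = false.
Proof. apply Bool.not_true_iff_false. intro H. apply Nat.even_spec in H. destruct H. lia. Qed.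
Lemma even_t k : Nat.even (S (2 * k + 1)) = true.
Proof. apply Nat.even_spec. exists (S k). lia. Qed.

Section Fin.
Variables (a b x0 : R) (p q u0 : R -> R) (r s : nat -> R -> R) (d : nat).
Hypothesis Hd : (1 <= d)%nat.
Hypothesis Hab : a < b.
Hypothesis H0 : a <= x0 <= b.
Hypothesis Hp : cont_on a b p.
Hypothesis Hrs : forall i, (i < d)%nat -> cont_on a b (r i) /\ cont_on a b (s i).
Hypothesis Hpnz : forall x, a <= x <= b -> p x <> 0.
Hypothesis Hunz : forall x, a <= x <= b -> u0 x <> 0.
Hypothesis Hud : forall x, a <= x <= b -> ex_deriv_on a b u0 x.
Hypothesis HPd : forall x, a <= x <= b -> ex_deriv_on a b (fun t => p t * Dab a b u0 t) x.
Hypothesis HL : forall x, a <= x <= b -> Lop a b p q u0 x = 0.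

Lemma Lop_u0_1 x : a <= x <= b -> Lop a b p q (fun t => u0 t * 1) x = 0.
Proof.
  intros Hx. rewrite <- (HL x Hx). unfold Lop. rewrite Rmult_1_r. f_equal.
  apply Dab_ext; auto. intros t Ht. f_equal. apply Dab_ext; auto. intros; ring.
Qed.

Lemma part1_i (n : nat -> nat) M i x : nabs d n = S M -> (i < d)%nat -> a <= x <= b ->
  Dab a b (Xt_aux a b x0 p u0 r s d (2 * M + 1) (mi_sub (fun k => (2 * Z.of_nat (n k))%Z) i)) x
  = INR (S (2 * M)) * (u0 x * Rop a b (r i) (s i)
        (fun t => u0 t * Xt a b x0 p u0 r s d
                    (fun k => (2 * Z.of_nat (n k) - 2 * delta i k)%Z) t) x).
Proof.
  intros HN Hi Hx.
  set (j2 := fun k => (2 * Z.of_nat (n k))%Z).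
  assert (Ej : (fun k => (2 * Z.of_nat (n k) - 2 * delta i k)%Z) = mi_sub (mi_sub j2 i) i).
  { apply functional_extensionality; intros k. unfold mi_sub, j2. lia. }
  assert (Habs : mi_abs d j2 = (2 * Z.of_nat (S M))%Z) by (unfold j2; rewrite mi_abs_2n, HN; reflexivity).
  rewrite Ej. unfold Xt. rewrite !mi_abs_sub by exact Hi. rewrite Habs.
  destruct (n i) as [|ni] eqn:Hni.
  - assert (Hneg : has_neg d (mi_sub j2 i) = true).
    { apply has_neg_iff. exists i. split; auto. unfold mi_sub, j2. rewrite Hni, delta_ii. lia. }
    assert (Hneg2 : has_neg d (mi_sub (mi_sub j2 i) i) = true).
    { apply has_neg_iff. exists i. split; auto. unfold mi_sub, j2. rewrite Hni, delta_ii. lia. }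
    rewrite Xt_neg by exact Hneg. rewrite Xt_neg by exact Hneg2.
    rewrite Rop_zero by auto. rewrite (Dab_eq a b _ x 0 Hab Hx (D_const a b 0 x)). ring.
  - replace (2 * M + 1)%nat with (S (2 * M)) by lia.
    replace (Z.to_nat (2 * Z.of_nat (S M) - 1 - 1)) with (2 * M)%nat by lia.
    rewrite Xt_S.
    assert (Hnn : has_neg d (mi_sub j2 i) = false).
    { apply has_neg_false. intros k Hk. unfold mi_sub, j2.
      destruct (Nat.eq_dec k i) as [->|Hki]. rewrite Hni, delta_ii. lia.
      destruct (delta01 i k) as [E|E]. rewrite E; lia. apply delta1 in E; contradiction. }
    rewrite Hnn.
    assert (Hodd : forall k, (k < d)%nat -> Z.odd (mi_sub j2 i k) = true <-> k = i).
    { intros k Hk. unfold mi_sub, j2. rewrite oddZ2d by apply delta01. apply delta1. }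
    replace (admissible d (mi_sub j2 i)) with true.
    2: { symmetry. apply admissible_of with i. intros k Hk Ho. apply Hodd; auto. }
    rewrite odd_t. cbn [negb]. cbv beta iota zeta.
    rewrite (odd_idx_of d _ i Hi Hodd).
    apply Dab_eq; auto.
    apply (D_RInt_c a b (INR (S (2*M))) (fun t => u0 t * Rop a b (r i) (s i) (fun y => u0 y * Xt_aux a b x0 p u0 r s d (2*M) (mi_sub (mi_sub j2 i) i) y) t) x0 x); auto. apply (cont_oddint a b p u0 r s d); auto.
    apply (Xt_C1 a b x0 p u0 r s d); auto.
Qed.

Lemma part1 (n : nat -> nat) x : a <= x <= b ->
    Lop a b p q
      (fun t => u0 t * Xt a b x0 p u0 r s d (fun k => (2 * Z.of_nat (n k))%Z) t) x
    = 2 * INR (nabs d n) * (2 * INR (nabs d n) - 1) *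
      sumR d (fun i => Rop a b (r i) (s i)
        (fun t => u0 t * Xt a b x0 p u0 r s d
                    (fun k => (2 * Z.of_nat (n k) - 2 * delta i k)%Z) t) x).
Proof.
  intros Hx. assert (HC : forall k j, C1 a b (Xt_aux a b x0 p u0 r s d k j)) by (intros; apply (Xt_C1 a b x0 p u0 r s d); auto).
  unfold Xt at 1. rewrite mi_abs_2n.
  set (j2 := fun k => (2 * Z.of_nat (n k))%Z).
  assert (Hn2 : has_neg d j2 = false) by (apply has_neg_false; intros; unfold j2; lia).
  destruct (nabs d n) as [|M] eqn:HN.
  - simpl Z.to_nat. rewrite Xt_0, Hn2. rewrite Lop_u0_1 by auto. simpl INR. ring.
  - replace (Z.to_nat (2 * Z.of_nat (S M))) with (S (2 * M + 1)) by lia.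
    rewrite Xt_S, Hn2.
    replace (admissible d j2) with true.
    2: { symmetry. apply admissible_of with 0%nat. intros k _ Hk. unfold j2 in Hk. rewrite oddZ2 in Hk. discriminate. }
    rewrite odd_f. cbn [negb]. cbv beta iota.
    rewrite (L_formula a b x0 p q u0); auto.
    all: try (apply C1_sumR; auto).
    rewrite (Dab_eq a b _ x _ Hab Hx (D_sumR a b d _ x (fun i => Dab a b (Xt_aux a b x0 p u0 r s d (2 * M + 1) (mi_sub j2 i)) x)
        (fun i Hi => C1_deriv _ _ _ _ Hab (HC _ _) Hx))).
    rewrite (sumR_ext d _ (fun i => (INR (S (2 * M)) * u0 x) * Rop a b (r i) (s i)
        (fun t => u0 t * Xt a b x0 p u0 r s d
                    (fun k => (2 * Z.of_nat (n k) - 2 * delta i k)%Z) t) x)).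
    2: { intros i Hi. unfold j2. rewrite (part1_i n M i x HN Hi Hx). ring. }
    rewrite sumR_scal.
    replace (INR (S (2 * M + 1))) with (2 * INR (S M)) by (rewrite !S_INR, plus_INR, mult_INR, S_INR; simpl; ring).
    replace (INR (S (2 * M))) with (2 * INR (S M) - 1) by (rewrite !S_INR, mult_INR; simpl; ring).
    field. apply Hunz, Hx.
Qed.


Lemma is_neg_delta_false_of m : (exists k, (k < d)%nat /\ (m k > 0 \/ m k < -1)%Z) -> is_neg_delta d m = false.
Proof.
  intros [k [Hk Hm]]. destruct (is_neg_delta d m) eqn:E; auto.
  apply is_neg_delta_iff in E. destruct E as [i [Hi H]]. specialize (H k Hk).
  destruct (delta01 i k) as [E|E]; rewrite E in H; lia.
Qed.

Lemma nabs_nz (n : nat -> nat) M : nabs d n = S M -> exists k, (k < d)%nat /\ n k <> 0%nat.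
Proof.
  unfold nabs. intros H.
  assert (Hl : forall l, fold_right Nat.add 0%nat (map n l) = S M -> exists k, In k l /\ n k <> 0%nat).
  { induction l as [|y l IH]; simpl; intros E. discriminate.
    destruct (n y) eqn:Ey. simpl in E. destruct (IH E) as [k [Hk Hn]]. exists k; auto.
    exists y. split; auto. rewrite Ey; discriminate. }
  destruct (Hl _ H) as [k [Hk Hn]]. apply in_seq in Hk. exists k. split; auto. lia.
Qed.

Lemma part2_i (n : nat -> nat) i x : (i < d)%nat -> a <= x <= b ->
  Dab a b (X_aux a b x0 p u0 r s d (2 * nabs d n) (mi_sub (fun k => (2 * Z.of_nat (n k))%Z) i)) x
  = INR (2 * nabs d n) * (u0 x * Rop a b (r i) (s i)
        (fun t => u0 t * Xp a b x0 p u0 r s d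
                    (fun k => (2 * Z.of_nat (n k) - 2 * delta i k)%Z) t) x).
Proof.
  intros Hi Hx.
  set (j2 := fun k => (2 * Z.of_nat (n k))%Z).
  assert (Ej : (fun k => (2 * Z.of_nat (n k) - 2 * delta i k)%Z) = mi_sub (mi_sub j2 i) i).
  { apply functional_extensionality; intros k. unfold mi_sub, j2. lia. }
  assert (Habs : mi_abs d j2 = (2 * Z.of_nat (nabs d n))%Z) by (unfold j2; rewrite mi_abs_2n; reflexivity).
  rewrite Ej. unfold Xp. rewrite !mi_abs_sub by exact Hi. rewrite Habs.
  destruct (nabs d n) as [|M] eqn:HN.
  - replace (2 * 0)%nat with 0%nat by reflexivity. rewrite X_0.
    replace (is_neg_delta d (mi_sub j2 i)) with true.
    2: { symmetry. apply is_neg_delta_iff. exists i. split; auto. intros k Hk.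
         unfold mi_sub, j2. rewrite (nabs_zero d n HN k Hk). lia. }
    rewrite (Dab_eq a b _ x 0 Hab Hx (D_const a b _ x)). simpl INR. ring.
  - destruct (nabs_nz n M HN) as [k0 [Hk0 Hnk0]].
    destruct (n i) as [|ni] eqn:Hni.
    + assert (Hneg : has_neg d (mi_sub j2 i) = true).
      { apply has_neg_iff. exists i. split; auto. unfold mi_sub, j2. rewrite Hni, delta_ii. lia. }
      assert (Hnd : is_neg_delta d (mi_sub j2 i) = false).
      { apply is_neg_delta_false_of. exists k0. split; auto. unfold mi_sub, j2.
        destruct (delta01 i k0) as [E|E]; rewrite E; lia. }
      assert (Hneg2 : has_neg d (mi_sub (mi_sub j2 i) i) = true).
      { apply has_neg_iff. exists i. split; auto. unfold mi_sub, j2. rewrite Hni, delta_ii. lia. }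
      assert (Hnd2 : is_neg_delta d (mi_sub (mi_sub j2 i) i) = false).
      { apply is_neg_delta_false_of. exists i. split; auto. unfold mi_sub, j2. rewrite Hni, delta_ii. lia. }
      rewrite X_neg by auto. rewrite X_neg by auto.
      rewrite Rop_zero by auto. rewrite (Dab_eq a b _ x 0 Hab Hx (D_const a b 0 x)). ring.
    + replace (2 * S M)%nat with (S (2 * M + 1)) by lia.
      replace (Z.to_nat (2 * Z.of_nat (S M) - 1 - 1) + 1)%nat with (2 * M + 1)%nat by lia.
      rewrite X_S.
      assert (Hnd : is_neg_delta d (mi_sub j2 i) = false).
      { apply is_neg_delta_false_of. exists i. split; auto. unfold mi_sub, j2. rewrite Hni, delta_ii. lia. }
      assert (Hnn : has_neg d (mi_sub j2 i) = false).
      { apply has_neg_false. intros k Hk. unfold mi_sub, j2.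
        destruct (Nat.eq_dec k i) as [->|Hki]. rewrite Hni, delta_ii. lia.
        destruct (delta01 i k) as [E|E]. rewrite E; lia. apply delta1 in E; contradiction. }
      rewrite Hnd, Hnn.
      assert (Hodd : forall k, (k < d)%nat -> Z.odd (mi_sub j2 i k) = true <-> k = i).
      { intros k Hk. unfold mi_sub, j2. rewrite oddZ2d by apply delta01. apply delta1. }
      replace (admissible d (mi_sub j2 i)) with true.
      2: { symmetry. apply admissible_of with i. intros k Hk Ho. apply Hodd; auto. }
      rewrite even_t. cbn [negb]. cbv beta iota zeta.
      rewrite (odd_idx_of d _ i Hi Hodd).
      apply Dab_eq; auto.
      apply (D_RInt_c a b (INR (S (2*M+1))) (fun t => u0 t * Rop a b (r i) (s i) (fun y => u0 y * X_aux a b x0 p u0 r s d (2*M+1) (mi_sub (mi_sub j2 i) i) y) t) x0 x); auto.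
      apply (cont_oddint a b p u0 r s d); auto.
      apply (X_C1 a b x0 p u0 r s d); auto.
Qed.

Lemma part2 (n : nat -> nat) x : a <= x <= b ->
    Lop a b p q
      (fun t => u0 t * Xp a b x0 p u0 r s d (fun k => (2 * Z.of_nat (n k))%Z) t) x
    = (2 * INR (nabs d n) + 1) * (2 * INR (nabs d n)) *
      sumR d (fun i => Rop a b (r i) (s i)
        (fun t => u0 t * Xp a b x0 p u0 r s d
                    (fun k => (2 * Z.of_nat (n k) - 2 * delta i k)%Z) t) x).
Proof.
  intros Hx. assert (HC : forall k j, C1 a b (X_aux a b x0 p u0 r s d k j)) by (intros; apply (X_C1 a b x0 p u0 r s d); auto).
  unfold Xp at 1. rewrite mi_abs_2n.
  set (j2 := fun k => (2 * Z.of_nat (n k))%Z).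
  assert (Hn2 : has_neg d j2 = false) by (apply has_neg_false; intros; unfold j2; lia).
  assert (Hnd : is_neg_delta d j2 = false).
  { destruct (is_neg_delta d j2) eqn:E; auto. apply is_neg_delta_iff in E.
    destruct E as [i [Hi H]]. specialize (H i Hi). unfold j2 in H. rewrite delta_ii in H. lia. }
  replace (Z.to_nat (2 * Z.of_nat (nabs d n)) + 1)%nat with (S (2 * nabs d n)) by lia.
  rewrite X_S, Hnd, Hn2.
  replace (admissible d j2) with true.
  2: { symmetry. apply admissible_of with 0%nat. intros k _ Hk. unfold j2 in Hk. rewrite oddZ2 in Hk. discriminate. }
  rewrite even_f. cbn [negb]. cbv beta iota.
  rewrite (L_formula a b x0 p q u0); auto.
  all: try (apply C1_sumR; auto).
  rewrite (Dab_eq a b _ x _ Hab Hx (D_sumR a b d _ x (fun i => Dab a b (X_aux a b x0 p u0 r s d (2 * nabs d n) (mi_sub j2 i)) x)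
      (fun i Hi => C1_deriv _ _ _ _ Hab (HC _ _) Hx))).
  rewrite (sumR_ext d _ (fun i => (INR (2 * nabs d n) * u0 x) * Rop a b (r i) (s i)
      (fun t => u0 t * Xp a b x0 p u0 r s d
                  (fun k => (2 * Z.of_nat (n k) - 2 * delta i k)%Z) t) x)).
  2: { intros i Hi. unfold j2. rewrite (part2_i n i x Hi Hx). ring. }
  rewrite sumR_scal.
  rewrite S_INR, mult_INR. simpl (INR 2).
  field. apply Hunz, Hx.
Qed.

End Fin.

Theorem mainTheorem6 (d : nat) (x1 x2 x0 : R) (p q u0 : R -> R) (r s : nat -> R -> R) :
  (1 <= d)%nat -> x1 < x2 -> x1 <= x0 <= x2 ->
  cont_on x1 x2 p -> cont_on x1 x2 q ->
  (forall i, (i < d)%nat -> cont_on x1 x2 (r i) /\ cont_on x1 x2 (s i)) ->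
  (forall x, x1 <= x <= x2 -> p x <> 0) ->
  (forall x, x1 <= x <= x2 -> u0 x <> 0) ->
  (forall x, x1 <= x <= x2 -> ex_deriv_on x1 x2 u0 x) ->
  (forall x, x1 <= x <= x2 -> ex_deriv_on x1 x2 (fun t => p t * Dab x1 x2 u0 t) x) ->
  (forall x, x1 <= x <= x2 -> Lop x1 x2 p q u0 x = 0) ->
  forall (n : nat -> nat) (x : R), x1 <= x <= x2 ->
    Lop x1 x2 p q
      (fun t => u0 t * Xt x1 x2 x0 p u0 r s d (fun k => (2 * Z.of_nat (n k))%Z) t) x
    = 2 * INR (nabs d n) * (2 * INR (nabs d n) - 1) *
      sumR d (fun i => Rop x1 x2 (r i) (s i)
        (fun t => u0 t * Xt x1 x2 x0 p u0 r s d
                    (fun k => (2 * Z.of_nat (n k) - 2 * delta i k)%Z) t) x)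
  /\
    Lop x1 x2 p q
      (fun t => u0 t * Xp x1 x2 x0 p u0 r s d (fun k => (2 * Z.of_nat (n k))%Z) t) x
    = (2 * INR (nabs d n) + 1) * (2 * INR (nabs d n)) *
      sumR d (fun i => Rop x1 x2 (r i) (s i)
        (fun t => u0 t * Xp x1 x2 x0 p u0 r s d
                    (fun k => (2 * Z.of_nat (n k) - 2 * delta i k)%Z) t) x).
Proof.
  intros Hd Hab H0 Hp Hq Hrs Hpnz Hunz Hud HPd HL n x Hx. split.
  - apply (part1 x1 x2 x0 p q u0 r s d); auto.
  - apply (part2 x1 x2 x0 p q u0 r s d); auto.
Qed.
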